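(* Let $\mathcal A$ be an abelian category, let $M$ be an object and let $0\to F\to N\to C\to 0$ be a fully invariant short exact sequence in $\mathcal A$. Then: (1) $N$ is (strongly) $M$-$F$-split if and only if for every direct summand $M_1$ of $M$ and every direct summand $N_1$ of $N$, $N_1$ is (strongly) $M_1$-$(F\cap N_1)$-split. (2) $N$ is dual (strongly) $M$-$F$-split if and only if for every direct summand $M_1$ of $M$ and every direct summand $N_1$ of $N$, $N/N_1$ is dual (strongly) $M/M_1$-$((F+N_1)/N_1)$-split.
   Context: Convention: each statement containing parenthetical words holds in two versions: one obtained by deleting all parenthetical words and one obtained by keeping all of them. Let $\mathcal A$ be an abelian category. A morphism $s:X\to Y$ is a section if $ts=1_X$ for some $t$, and a retraction if $st=1_Y$ for some $t$. A monomorphism $i:K\to M$ is fully invariant if for every morphism $h:M\to M$ there is $\alpha:K\to K$ with $hi=i\alpha$; an epimorphism $d:M\to C$ is fully coinvariant if for every $h:M\to M$ there is $\beta:C\to C$ with $dh=\beta d$. A short exact sequence $0\to F\xrightarrow{i}N\xrightarrow{d}C\to 0$ is fully invariant if $i$ is fully invariant (equivalently $d$ is fully coinvariant). (For a direct summand $N_1$ of $N$, the inclusion $F\cap N_1\to N_1$ is fully invariant and $(F+N_1)/N_1$ is a fully invariant subobject of $N/N_1$, so the notions below apply.) For an object $M$ and a fully invariant short exact sequence $0\to F\xrightarrow{i}N\xrightarrow{d}C\to 0$: $N$ is (strongly) $M$-$F$-split if for every morphism $g:M\to N$, $\ker(dg)$ (equivalently the morphism $P\to M$ in the pullback of $i$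 along $g$) is a (fully invariant) section; $N$ is dual (strongly) $M$-$F$-split if for every morphism $g:N\to M$, $\mathrm{coker}(gi)$ (equivalently the morphism $M\to Q$ in the pushout of $d$ along $g$) is a (fully coinvariant) retraction. *)

(* Defs.v *)
Set Implicit Arguments.

Record AbCat := {
  Ob : Type;
  Hom : Ob -> Ob -> Type;
  idm : forall A : Ob, Hom A A;
  comp : forall A B C : Ob, Hom B C -> Hom A B -> Hom A C;  (* comp g f = g o f *)
  zerom : forall A B : Ob, Hom A B;
  addm : forall A B : Ob, Hom A B -> Hom A B -> Hom A B;
  oppm : forall A B : Ob, Hom A B -> Hom A B;
  compA : forall A B C D (h : Hom C D) (g : Hom B C) (f : Hom A B),
      comp h (comp g f) = comp (comp h g) f;
  comp1m : forall A B (f : Hom A B), comp (idm B) f = f;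
  compm1 : forall A B (f : Hom A B), comp f (idm A) = f;
  addmA : forall A B (f g h : Hom A B), addm f (addm g h) = addm (addm f g) h;
  addmC : forall A B (f g : Hom A B), addm f g = addm g f;
  add0m : forall A B (f : Hom A B), addm (zerom A B) f = f;
  addNm : forall A B (f : Hom A B), addm (oppm f) f = zerom A B;
  compDl : forall A B C (g1 g2 : Hom B C) (f : Hom A B),
      comp (addm g1 g2) f = addm (comp g1 f) (comp g2 f);
  compDr : forall A B C (g : Hom B C) (f1 f2 : Hom A B),
      comp g (addm f1 f2) = addm (comp g f1) (comp g f2);
  has_zero_object : exists Z : Ob,
      (forall A (f g : Hom A Z), f = g) /\ (forall A (f g : Hom Z A), f = g);
  has_biproducts : forall A B : Ob, exists (P : Ob) (i1 : Hom A P) (i2 : Hom B P)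
      (p1 : Hom P A) (p2 : Hom P B),
      comp p1 i1 = idm A /\ comp p2 i2 = idm B /\
      comp p1 i2 = zerom B A /\ comp p2 i1 = zerom A B /\
      addm (comp i1 p1) (comp i2 p2) = idm P;
  has_kernels : forall A B (f : Hom A B), exists (K : Ob) (k : Hom K A),
      comp f k = zerom K B /\
      (forall X (h : Hom X A), comp f h = zerom X B ->
         exists! u : Hom X K, comp k u = h);
  has_cokernels : forall A B (f : Hom A B), exists (Q : Ob) (c : Hom B Q),
      comp c f = zerom A Q /\
      (forall X (h : Hom B X), comp h f = zerom A X ->
         exists! u : Hom Q X, comp u c = h);
  mono_is_kernel : forall A B (m : Hom A B),
      (forall X (u v : Hom X A), comp m u = comp m v -> u = v) ->
      exists (C : Ob) (g : Hom B C), comp g m = zerom A C /\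
      (forall X (h : Hom X B), comp g h = zerom X C ->
         exists! u : Hom X A, comp m u = h);
  epi_is_cokernel : forall A B (e : Hom A B),
      (forall X (u v : Hom B X), comp u e = comp v e -> u = v) ->
      exists (K : Ob) (g : Hom K A), comp e g = zerom K B /\
      (forall X (h : Hom A X), comp h g = zerom K X ->
         exists! u : Hom B X, comp u e = h)
}.

Arguments Hom {a} _ _.
Arguments idm {a} _.
Arguments comp {a A B C} _ _.
Arguments zerom {a} _ _.
Arguments addm {a A B} _ _.
Arguments oppm {a A B} _.

Section Notions.
Context {Ac : AbCat}.
Local Notation Ob := (Ob Ac).

Definition is_mono {A B : Ob} (m : Hom A B) : Prop :=
  forall X (u v : Hom X A), comp m u = comp m v -> u = v.

Definition is_epi {A B : Ob} (e : Hom A B) : Prop :=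
  forall X (u v : Hom B X), comp u e = comp v e -> u = v.

Definition is_kernel {A B K : Ob} (f : Hom A B) (k : Hom K A) : Prop :=
  comp f k = zerom K B /\
  forall X (h : Hom X A), comp f h = zerom X B ->
    exists! u : Hom X K, comp k u = h.

Definition is_cokernel {A B Q : Ob} (f : Hom A B) (c : Hom B Q) : Prop :=
  comp c f = zerom A Q /\
  forall X (h : Hom B X), comp h f = zerom A X ->
    exists! u : Hom Q X, comp u c = h.

Definition is_pullback {A B C P : Ob} (f : Hom A C) (g : Hom B C)
    (p1 : Hom P A) (p2 : Hom P B) : Prop :=
  comp f p1 = comp g p2 /\
  forall X (h1 : Hom X A) (h2 : Hom X B), comp f h1 = comp g h2 ->
    exists! u : Hom X P, comp p1 u = h1 /\ comp p2 u = h2.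

Definition is_section {X Y : Ob} (s : Hom X Y) : Prop :=
  exists t : Hom Y X, comp t s = idm X.

Definition is_retraction {X Y : Ob} (s : Hom X Y) : Prop :=
  exists t : Hom Y X, comp s t = idm Y.

Definition fully_invariant {K M : Ob} (i : Hom K M) : Prop :=
  is_mono i /\ forall h : Hom M M, exists a : Hom K K, comp h i = comp i a.

Definition fully_coinvariant {M C : Ob} (d : Hom M C) : Prop :=
  is_epi d /\ forall h : Hom M M, exists b : Hom C C, comp d h = comp b d.

Definition short_exact {F N C : Ob} (i : Hom F N) (d : Hom N C) : Prop :=
  is_mono i /\ is_epi d /\ is_kernel d i /\ is_cokernel i d.

Definition fi_short_exact {F N C : Ob} (i : Hom F N) (d : Hom N C) : Prop :=
  short_exact i d /\ fully_invariant i.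

Definition MF_split (strong : bool) (M : Ob) {F N C : Ob}
    (i : Hom F N) (d : Hom N C) : Prop :=
  forall (g : Hom M N) (K : Ob) (k : Hom K M), is_kernel (comp d g) k ->
    is_section k /\ (strong = true -> fully_invariant k).

Definition dual_MF_split (strong : bool) (M : Ob) {F N C : Ob}
    (i : Hom F N) (d : Hom N C) : Prop :=
  forall (g : Hom N M) (Q : Ob) (c : Hom M Q), is_cokernel (comp g i) c ->
    is_retraction c /\ (strong = true -> fully_coinvariant c).

End Notions.

(* Main.v *)
Require Import Defs.

Arguments compA {a A B C D} h g f.
Arguments comp1m {a A B} f.
Arguments compm1 {a A B} f.
Arguments addmA {a A B} f g h.
Arguments addmC {a A B} f g.
Arguments add0m {a A B} f.
Arguments addNm {a A B} f.
Arguments compDl {a A B C} g1 g2 f.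
Arguments compDr {a A B C} g f1 f2.

Section Lemmas.
Context {Ac : AbCat}.

Lemma addm0 {A B : Ob Ac} (f : Hom A B) : addm f (zerom A B) = f.
Proof. rewrite addmC; apply add0m. Qed.

Lemma neg_unique {A B : Ob Ac} (a b : Hom A B) : addm a b = zerom A B -> a = oppm b.
Proof.
  intro E. rewrite <- (add0m (oppm b)), <- E, <- addmA, (addmC b), addNm, addm0.
  reflexivity.
Qed.

Lemma idem_zero {A B : Ob Ac} (x : Hom A B) : addm x x = x -> x = zerom A B.
Proof.
  intro E. transitivity (addm (oppm x) (addm x x)).
  - rewrite addmA, addNm, add0m; reflexivity.
  - rewrite E; apply addNm.
Qed.

Lemma comp0l {A B C : Ob Ac} (f : Hom A B) : comp (zerom B C) f = zerom A C.
Proof.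
  apply idem_zero. rewrite <- compDl, add0m. reflexivity.
Qed.

Lemma comp0r {A B C : Ob Ac} (f : Hom B C) : comp f (zerom A B) = zerom A C.
Proof.
  apply idem_zero. rewrite <- compDr, add0m. reflexivity.
Qed.

Lemma compNl {A B C : Ob Ac} (f : Hom B C) (g : Hom A B) :
  comp (oppm f) g = oppm (comp f g).
Proof. apply neg_unique. rewrite <- compDl, addNm. apply comp0l. Qed.

Lemma compNr {A B C : Ob Ac} (f : Hom B C) (g : Hom A B) :
  comp f (oppm g) = oppm (comp f g).
Proof. apply neg_unique. rewrite <- compDr, addNm. apply comp0r. Qed.

Lemma opp0 {A B : Ob Ac} : oppm (zerom A B) = zerom A B.
Proof. symmetry. apply neg_unique. apply add0m. Qed.

Lemma kernel_mono {A B K : Ob Ac} (f : Hom A B) (k : Hom K A) :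
  is_kernel f k -> is_mono k.
Proof.
  intros [Hz Hu] X u v E.
  destruct (Hu X (comp k u)) as [w [_ Hw]].
  - rewrite compA, Hz; apply comp0l.
  - rewrite <- (Hw u eq_refl). apply Hw. symmetry; exact E.
Qed.

Lemma cokernel_epi {A B Q : Ob Ac} (f : Hom A B) (c : Hom B Q) :
  is_cokernel f c -> is_epi c.
Proof.
  intros [Hz Hu] X u v E.
  destruct (Hu X (comp u c)) as [w [_ Hw]].
  - rewrite <- compA, Hz; apply comp0r.
  - rewrite <- (Hw u eq_refl). apply Hw. symmetry; exact E.
Qed.

Lemma pullback_mono {A B C P : Ob Ac} (f : Hom A C) (g : Hom B C)
    (p1 : Hom P A) (p2 : Hom P B) :
  is_pullback f g p1 p2 -> is_mono f -> is_mono p2.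
Proof.
  intros [Hc Hu] Hf X u v E.
  assert (E1 : comp p1 u = comp p1 v).
  { apply Hf. rewrite !compA, Hc, <- !compA, E. reflexivity. }
  destruct (Hu X (comp p1 u) (comp p2 u)) as [w [_ Hw]].
  - rewrite !compA, Hc. reflexivity.
  - rewrite <- (Hw u (conj eq_refl eq_refl)). apply Hw. split; symmetry; assumption.
Qed.

Lemma mono_cok_factor {A B Q : Ob Ac} (j : Hom A B) (d1 : Hom B Q) :
  is_mono j -> is_cokernel j d1 ->
  forall X (h : Hom X B), comp d1 h = zerom X Q -> exists w, comp j w = h.
Proof.
  intros Hm [Hd1 Hcu] X h Hh.
  destruct (mono_is_kernel Ac _ _ j Hm) as [C0 [g0 [Hg0 Hu]]].
  destruct (Hcu C0 g0 Hg0) as [v [Hv _]].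
  destruct (Hu X h) as [w [Hw _]].
  - rewrite <- Hv, <- compA, Hh. apply comp0r.
  - exists w; exact Hw.
Qed.

End Lemmas.

Theorem corollary3p9 (Ac : AbCat) (M F N C : Ob Ac) (i : Hom F N) (d : Hom N C)
    (Hfi : fi_short_exact i d) :
  (forall strong : bool,
     MF_split strong M i d <->
     (forall (M1 : Ob Ac) (sM : Hom M1 M), is_section sM ->
      forall (N1 : Ob Ac) (sN : Hom N1 N), is_section sN ->
      forall (P : Ob Ac) (q : Hom P F) (j : Hom P N1), is_pullback i sN q j ->
      forall (C1 : Ob Ac) (d1 : Hom N1 C1), is_cokernel j d1 ->
        MF_split strong M1 j d1)) /\
  (forall strong : bool,
     dual_MF_split strong M i d <->
     (forall (M1 : Ob Ac) (sM : Hom M1 M), is_section sM ->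
      forall (N1 : Ob Ac) (sN : Hom N1 N), is_section sN ->
      forall (QM : Ob Ac) (cM : Hom M QM), is_cokernel sM cM ->
      forall (QN : Ob Ac) (cN : Hom N QN), is_cokernel sN cN ->
      forall (I : Ob Ac) (e : Hom F I) (m : Hom I QN),
        is_epi e -> is_mono m -> comp m e = comp cN i ->
      forall (C2 : Ob Ac) (d2 : Hom QN C2), is_cokernel m d2 ->
        dual_MF_split strong QM m d2)).
Proof.
  destruct Hfi as [[Hmi [Hed [Hker Hcokd]]] Hfinv].
  destruct Hker as [Hdi Hkeru].
  split.
  - intro strong; split.
    + intros Hsplit M1 sM [tM HtM] N1 sN _ P q j Hpb C1 d1 Hcok g K k Hk.
      assert (Hjm : is_mono j) by exact (pullback_mono _ _ _ _ Hpb Hmi).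
      destruct Hpb as [Hpbc Hpbu].
      set (g' := comp sN (comp g tM)).
      destruct (has_kernels Ac _ _ (comp d g')) as [K' [k' Hk']].
      destruct (Hsplit g' K' k' Hk') as [[rho Hrho] Hstr].
      assert (Hphi : exists phi : Hom K' K, comp k phi = comp tM k').
      { destruct Hk as [Hk0 Hku]. destruct Hk' as [Hk'0 _].
        destruct (Hkeru K' (comp g' k')) as [a [Ha _]].
        { rewrite compA. exact Hk'0. }
        destruct (Hpbu K' a (comp g (comp tM k'))) as [u [[Hu1 Hu2] _]].
        { rewrite Ha. unfold g'. rewrite !compA. reflexivity. }
        destruct (Hku K' (comp tM k')) as [phi [Hphi _]].
        { rewrite <- compA, <- Hu2, compA, (proj1 Hcok). apply comp0l. }
        exists phi; exact Hphi. }
      assert (Hpsi : exists psi : Hom K K', comp k' psi = comp sM k).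
      { destruct Hk as [Hk0 _].
        destruct (mono_cok_factor _ _ Hjm Hcok _ (comp g k)) as [w Hw].
        { rewrite compA; exact Hk0. }
        destruct Hk' as [_ Hk'u].
        destruct (Hk'u K (comp sM k)) as [psi [Hpsi _]].
        { transitivity (comp d (comp sN (comp g (comp (comp tM sM) k)))).
          { unfold g'; rewrite !compA; reflexivity. }
          rewrite HtM, comp1m, <- Hw, (compA sN j w), <- Hpbc, !compA, Hdi, !comp0l.
          reflexivity. }
        exists psi; exact Hpsi. }
      destruct Hphi as [phi Hphi], Hpsi as [psi Hpsi].
      assert (Hid : comp phi psi = idm K).
      { apply (kernel_mono _ _ Hk).
        rewrite compA, Hphi, <- compA, Hpsi, compA, HtM, comp1m, compm1.
        reflexivity. }
      split.
      * exists (comp phi (comp rho sM)).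
        rewrite <- !compA, <- Hpsi, (compA rho k' psi), Hrho, comp1m. exact Hid.
      * intro Hs. destruct (Hstr Hs) as [_ Hfi'].
        split; [exact (kernel_mono _ _ Hk) |]. intro h.
        destruct (Hfi' (comp sM (comp h tM))) as [beta Hbeta].
        exists (comp phi (comp beta psi)).
        rewrite compA, Hphi, <- compA, (compA k' beta psi), <- Hbeta.
        rewrite <- !compA, Hpsi, !(compA tM sM), HtM, !comp1m. reflexivity.
    + intros H g K k Hk.
      assert (HsM : is_section (idm M)) by (exists (idm M); apply comp1m).
      assert (HsN : is_section (idm N)) by (exists (idm N); apply comp1m).
      assert (Hpb : is_pullback i (idm N) (idm F) i).
      { split.
        - rewrite compm1, comp1m. reflexivity.
        - intros X h1 h2 E. exists h1. split.
          + split; [apply comp1m | rewrite E; apply comp1m].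
          + intros u' [E1 E2]. rewrite comp1m in E1. symmetry; exact E1. }
      exact (H M (idm M) HsM N (idm N) HsN F (idm F) i Hpb C d Hcokd g K k Hk).
  - intro strong; split.
    + intros Hsplit M1 sM [tM HtM] N1 sN _ QM cM HcM QN cN HcN I e m He Hm Hme
        C2 d2 Hd2 g Q c Hc.
      destruct (proj2 HcM M (addm (idm M) (oppm (comp sM tM)))) as [sig [Hsig _]].
      { rewrite compDl, comp1m, compNl, <- compA, HtM, compm1, addmC, addNm.
        reflexivity. }
      assert (HcMs : comp cM sig = idm QM).
      { apply (cokernel_epi _ _ HcM).
        rewrite <- compA, Hsig, compDr, compm1, compNr, compA, (proj1 HcM),
          comp0l, opp0, addm0, comp1m. reflexivity. }
      set (g' := comp sig (comp g cN)).
      destruct (has_cokernels Ac _ _ (comp g' i)) as [Q' [c' Hc']].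
      destruct (Hsplit g' Q' c' Hc') as [[rho Hrho] Hstr].
      assert (Hphi : exists phi : Hom Q Q', comp phi c = comp c' sig).
      { destruct (proj2 Hc Q' (comp c' sig)) as [phi [Hphi _]].
        { apply He. rewrite comp0l.
          transitivity (comp c' (comp sig (comp g (comp m e)))).
          { rewrite !compA; reflexivity. }
          rewrite Hme.
          transitivity (comp c' (comp g' i)).
          { unfold g'; rewrite !compA; reflexivity. }
          exact (proj1 Hc'). }
        exists phi; exact Hphi. }
      assert (Hpsi : exists psi : Hom Q' Q, comp psi c' = comp c cM).
      { destruct (proj2 Hc' Q (comp c cM)) as [psi [Hpsi _]].
        { transitivity (comp (comp c (comp g m)) e).
          { unfold g'.
            transitivity (comp c (comp (comp cM sig) (comp g (comp cN i)))).
            { rewrite !compA; reflexivity. }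
            rewrite HcMs, comp1m, <- Hme. rewrite !compA; reflexivity. }
          rewrite (proj1 Hc); apply comp0l. }
        exists psi; exact Hpsi. }
      destruct Hphi as [phi Hphi], Hpsi as [psi Hpsi].
      assert (Hid : comp psi phi = idm Q).
      { apply (cokernel_epi _ _ Hc).
        rewrite <- compA, Hphi, compA, Hpsi, <- compA, HcMs, compm1, comp1m.
        reflexivity. }
      split.
      * exists (comp cM (comp rho phi)).
        rewrite !compA, <- Hpsi, <- (compA psi c' rho), Hrho, compm1. exact Hid.
      * intro Hs. destruct (Hstr Hs) as [_ Hfc].
        split; [exact (cokernel_epi _ _ Hc) |]. intro h.
        destruct (Hfc (comp sig (comp h cM))) as [beta Hbeta].
        exists (comp psi (comp beta phi)).
        rewrite <- !compA, Hphi, (compA beta c' sig), <- Hbeta, !compA, Hpsi.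
        rewrite <- (compA c cM sig), HcMs, compm1.
        rewrite <- (compA (comp c h) cM sig), HcMs, compm1. reflexivity.
    + intro H.
      destruct (has_zero_object Ac) as [Z [HZ1 HZ2]].
      intros g Q c Hc.
      assert (HsM : is_section (zerom Z M)) by (exists (zerom M Z); apply HZ2).
      assert (HsN : is_section (zerom Z N)) by (exists (zerom N Z); apply HZ2).
      assert (Hcz : forall A : Ob Ac, is_cokernel (zerom Z A) (idm A)).
      { intro A. split; [apply comp1m |].
        intros X h _. exists h. split; [apply compm1 |].
        intros u' E. rewrite compm1 in E. symmetry; exact E. }
      assert (Hepi : is_epi (idm F)).
      { intros X u v E. rewrite !compm1 in E. exact E. }
      assert (Hme : comp i (idm F) = comp (idm N) i).
      { rewrite compm1, comp1m. reflexivity. }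
      exact (H Z (zerom Z M) HsM Z (zerom Z N) HsN M (idm M) (Hcz M)
               N (idm N) (Hcz N) F (idm F) i Hepi Hmi Hme C d Hcokd g Q c Hc).
Qed.
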